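(* Let $\mathcal{C}$ be a skeletally small triangulated category and $\mathcal{D}$ a radical dense subcategory of $\mathcal{C}$. If $U\in\mathcal{C}$ and $[U]$ is a torsion element of $G(\mathcal{C})$, then $U\in\mathcal{D}$.
   Context: $G(\mathcal{C})$ is the Grothendieck group of $\mathcal{C}$ (free abelian group on isomorphism classes modulo $[V]=[U]+[W]$ for exact triangles $U\to V\to W\to U[1]$). A dense subcategory is a triangulated subcategory $\mathcal{D}$ (full, closed under $[\pm1]$, isomorphisms and cones) such that for every $U\in\mathcal{C}$ there is $V$ with $U\oplus V\in\mathcal{D}$; it is radical if $U^n\in\mathcal{D}$ for some $n\ge1$ implies $U\in\mathcal{D}$. *)

(* Defs.v *)
From HB Require Import structures.
From mathcomp Require Import all_boot all_algebra.
From Stdlib Require Import ClassicalEpsilon.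
Import GRing.Theory.
Local Open Scope ring_scope.

Record preadd := PreAdd {
  Obj : Type;
  Hom : Obj -> Obj -> zmodType;
  comp : forall X Y Z : Obj, Hom Y Z -> Hom X Y -> Hom X Z;   (* comp g f = g o f *)
  idm : forall X : Obj, Hom X X;
  compA : forall X Y Z W (h : Hom Z W) (g : Hom Y Z) (f : Hom X Y),
      comp _ _ _ h (comp _ _ _ g f) = comp _ _ _ (comp _ _ _ h g) f;
  comp1m : forall X Y (f : Hom X Y), comp _ _ _ (idm Y) f = f;
  compm1 : forall X Y (f : Hom X Y), comp _ _ _ f (idm X) = f;
  compDl : forall X Y Z (g g' : Hom Y Z) (f : Hom X Y),
      comp _ _ _ (g + g') f = comp _ _ _ g f + comp _ _ _ g' f;
  compDr : forall X Y Z (g : Hom Y Z) (f f' : Hom X Y),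
      comp _ _ _ g (f + f') = comp _ _ _ g f + comp _ _ _ g f'
}.

Arguments Hom {p}.
Arguments comp {p X Y Z}.
Arguments idm {p} X.
Notation "g \oc f" := (comp g f) (at level 40, left associativity).

Section PreaddDefs.
Variable C : preadd.

Definition is_iso {X Y : Obj C} (f : Hom X Y) : Prop :=
  exists g : Hom Y X, g \oc f = idm X /\ f \oc g = idm Y.

Definition iso (X Y : Obj C) : Prop := exists f : Hom X Y, is_iso f.

Definition is_zero_obj (Z : Obj C) : Prop :=
  forall X : Obj C, (forall f : Hom X Z, f = 0) /\ (forall f : Hom Z X, f = 0).

Definition is_biprod (S U V : Obj C) (i1 : Hom U S) (i2 : Hom V S)
    (p1 : Hom S U) (p2 : Hom S V) : Prop :=
  [/\ p1 \oc i1 = idm U, p2 \oc i2 = idm V, p1 \oc i2 = 0, p2 \oc i1 = 0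
    & i1 \oc p1 + i2 \oc p2 = idm S].

Definition is_dsum (S U V : Obj C) : Prop :=
  exists i1 i2 p1 p2, @is_biprod S U V i1 i2 p1 p2.

Fixpoint is_pow (U : Obj C) (n : nat) : Obj C -> Prop :=
  match n with
  | 0 => fun S => is_zero_obj S
  | n'.+1 => fun S => exists T, is_pow U n' T /\ is_dsum S T U
  end.
End PreaddDefs.

Arguments is_iso {C X Y}.
Arguments iso {C}.
Arguments is_zero_obj {C}.
Arguments is_dsum {C}.
Arguments is_pow {C}.

Record addcat := AddCat {
  ac_pre :> preadd;
  zero_ex : exists Z : Obj ac_pre, is_zero_obj Z;
  dsum_ex : forall X Y : Obj ac_pre, exists S, is_dsum S X Y
}.

Record triang (C : addcat) := Triang {
  sh : Obj C -> Obj C;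
  shm : forall X Y : Obj C, Hom X Y -> Hom (sh X) (sh Y);
  shm_id : forall X, shm _ _ (idm X) = idm (sh X);
  shm_comp : forall X Y Z (g : Hom Y Z) (f : Hom X Y),
      shm _ _ (g \oc f) = shm _ _ g \oc shm _ _ f;
  shm_add : forall X Y (f f' : Hom X Y), shm _ _ (f + f') = shm _ _ f + shm _ _ f';
  (* [1] is an autoequivalence: fully faithful and essentially surjective *)
  shm_bij : forall X Y, bijective (shm X Y);
  sh_esurj : forall Y, exists X, iso (sh X) Y;
  dist : forall X Y Z : Obj C, Hom X Y -> Hom Y Z -> Hom Z (sh X) -> Prop;
  dist_iso : forall X Y Z X' Y' Z' (f : Hom X Y) (g : Hom Y Z) (h : Hom Z (sh X))
      (f' : Hom X' Y') (g' : Hom Y' Z') (h' : Hom Z' (sh X'))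
      (a : Hom X X') (b : Hom Y Y') (c : Hom Z Z'),
      is_iso a -> is_iso b -> is_iso c ->
      b \oc f = f' \oc a -> c \oc g = g' \oc b -> shm _ _ a \oc h = h' \oc c ->
      dist _ _ _ f g h -> dist _ _ _ f' g' h';
  dist_id : forall X Z, is_zero_obj Z ->
      dist X X Z (idm X) 0 0;
  dist_ext : forall X Y (f : Hom X Y), exists Z (g : Hom Y Z) (h : Hom Z (sh X)),
      dist _ _ _ f g h;
  dist_rot : forall X Y Z (f : Hom X Y) (g : Hom Y Z) (h : Hom Z (sh X)),
      dist _ _ _ f g h <-> dist _ _ _ g h (- shm _ _ f);
  dist_morph : forall X Y Z X' Y' Z' (f : Hom X Y) (g : Hom Y Z) (h : Hom Z (sh X))
      (f' : Hom X' Y') (g' : Hom Y' Z') (h' : Hom Z' (sh X'))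
      (a : Hom X X') (b : Hom Y Y'),
      dist _ _ _ f g h -> dist _ _ _ f' g' h' -> b \oc f = f' \oc a ->
      exists c : Hom Z Z', c \oc g = g' \oc b /\ shm _ _ a \oc h = h' \oc c;
  dist_oct : forall X Y Z Z' X' Y' (f : Hom X Y) (g : Hom Y Z)
      (f1 : Hom Y Z') (f2 : Hom Z' (sh X))
      (g1 : Hom Z X') (g2 : Hom X' (sh Y))
      (h1 : Hom Z Y') (h2 : Hom Y' (sh X)),
      dist _ _ _ f f1 f2 -> dist _ _ _ g g1 g2 -> dist _ _ _ (g \oc f) h1 h2 ->
      exists (u : Hom Z' Y') (v : Hom Y' X'),
        [/\ dist _ _ _ u v (shm _ _ f1 \oc g2),
            u \oc f1 = h1 \oc g, h2 \oc u = f2,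
            v \oc h1 = g1 & g2 \oc v = shm _ _ f \oc h2]
}.

Arguments sh {C}.
Arguments shm {C} t {X Y}.
Arguments dist {C} t {X Y Z}.

Section Groth.
Variables (C : addcat) (T : triang C).

(* The generator [U] of the free abelian group on isomorphism classes of
   objects, realized (injectively) as the indicator function of the
   isomorphism class of U, with values in int. *)
Definition gen (U : Obj C) : Obj C -> int :=
  fun X => if excluded_middle_informative (iso X U) then 1 else 0.

(* The subgroup of relations [V] - [U] - [W] for distinguished triangles
   U -> V -> W -> U[1]; G(C) is the quotient of the free group by it. *)
Inductive groth_rel : (Obj C -> int) -> Prop :=
| gr_tri : forall U V W (f : Hom U V) (g : Hom V W) (h : Hom W (sh T U)),
    dist T f g h -> groth_rel (fun X => gen V X - gen U X - gen W X)
| gr_zero : groth_rel (fun _ => 0)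
| gr_add : forall a b, groth_rel a -> groth_rel b -> groth_rel (fun X => a X + b X)
| gr_opp : forall a, groth_rel a -> groth_rel (fun X => - a X).

Definition groth_torsion (U : Obj C) : Prop :=
  exists n : nat, (0 < n)%N /\ groth_rel (fun X => gen U X *+ n).

Definition triang_sub (D : Obj C -> Prop) : Prop :=
  [/\ (forall X Y, iso X Y -> D X -> D Y),
      (forall X, D X -> D (sh T X)),
      (forall X, D (sh T X) -> D X)
    & (forall X Y Z (f : Hom X Y) (g : Hom Y Z) (h : Hom Z (sh T X)),
         dist T f g h -> D X -> D Y -> D Z)].

Definition dense_sub (D : Obj C -> Prop) : Prop :=
  triang_sub D /\ forall U, exists V S, is_dsum S U V /\ D S.

Definition radical_sub (D : Obj C -> Prop) : Prop :=
  forall U (n : nat) S, (1 <= n)%N -> is_pow U n S -> D S -> D U.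
End Groth.

Arguments gen {C}.
Arguments groth_rel {C}.
Arguments groth_torsion {C}.
Arguments triang_sub {C}.
Arguments dense_sub {C}.
Arguments radical_sub {C}.

(* Main.v *)
Require Import Defs.
From HB Require Import structures.
From mathcomp Require Import all_boot all_order all_algebra.
From Stdlib Require Import ClassicalEpsilon.
From mathcomp Require Import zify.
Import Order.TTheory GRing.Theory Num.Theory.
Set Implicit Arguments. Unset Strict Implicit. Unset Printing Implicit Defensive.
Notation Hom := Defs.Hom.
Local Open Scope ring_scope.

Section Basics.
Variable C : preadd.
Implicit Types X Y Z W : Obj C.

Lemma cA X Y Z W (h : Hom Z W) (g : Hom Y Z) (f : Hom X Y) :
  h \oc (g \oc f) = (h \oc g) \oc f.
Proof. exact: Defs.compA. Qed.
Lemma c1m X Y (f : Hom X Y) : idm Y \oc f = f. Proof. exact: comp1m. Qed.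
Lemma cm1 X Y (f : Hom X Y) : f \oc idm X = f. Proof. exact: compm1. Qed.
Lemma cDl X Y Z (g g' : Hom Y Z) (f : Hom X Y) : (g + g') \oc f = g \oc f + g' \oc f.
Proof. exact: compDl. Qed.
Lemma cDr X Y Z (g : Hom Y Z) (f f' : Hom X Y) : g \oc (f + f') = g \oc f + g \oc f'.
Proof. exact: compDr. Qed.
Lemma c0m X Y Z (f : Hom X Y) : (0 : Hom Y Z) \oc f = 0.
Proof. have H := cDl (0 : Hom Y Z) 0 f; rewrite addr0 in H.
apply: (addrI ((0 : Hom Y Z) \oc f)); by rewrite -H addr0. Qed.
Lemma cm0 X Y Z (g : Hom Y Z) : g \oc (0 : Hom X Y) = 0.
Proof. have H := cDr g (0 : Hom X Y) 0; rewrite addr0 in H.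
apply: (addrI (g \oc (0 : Hom X Y))); by rewrite addr0 -{1}H. Qed.
Lemma cNl X Y Z (g : Hom Y Z) (f : Hom X Y) : (- g) \oc f = - (g \oc f).
Proof. apply: (addIr (g \oc f)); by rewrite -cDl !addNr c0m. Qed.
Lemma cNr X Y Z (g : Hom Y Z) (f : Hom X Y) : g \oc (- f) = - (g \oc f).
Proof. apply: (addIr (g \oc f)); by rewrite -cDr !addNr cm0. Qed.
Lemma cBl X Y Z (g g' : Hom Y Z) (f : Hom X Y) : (g - g') \oc f = g \oc f - g' \oc f.
Proof. by rewrite cDl cNl. Qed.
Lemma cBr X Y Z (g : Hom Y Z) (f f' : Hom X Y) : g \oc (f - f') = g \oc f - g \oc f'.
Proof. by rewrite cDr cNr. Qed.

Lemma ra1 X Y (h : Hom Y X) (g : Hom X Y) : h \oc g = idm X ->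
  forall W (r : Hom W X), h \oc (g \oc r) = r.
Proof. by move=> e W r; rewrite cA e c1m. Qed.
Lemma ra0 X Y Z (h : Hom Y Z) (g : Hom X Y) : h \oc g = 0 ->
  forall W (r : Hom W X), h \oc (g \oc r) = 0.
Proof. by move=> e W r; rewrite cA e c0m. Qed.
Lemma raE X Y Z (h : Hom Y Z) (g : Hom X Y) k : h \oc g = k ->
  forall W (r : Hom W X), h \oc (g \oc r) = k \oc r.
Proof. by move=> e W r; rewrite cA e. Qed.

Lemma iso_refl X : iso X X.
Proof. by exists (idm X), (idm X); rewrite c1m. Qed.
Lemma iso_sym X Y : iso X Y -> iso Y X.
Proof. by case=> f [g [e1 e2]]; exists g, f. Qed.
Lemma iso_trans X Y Z : iso X Y -> iso Y Z -> iso X Z.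
Proof.
case=> f [f' [e1 e2]] [g [g' [e3 e4]]]; exists (g \oc f), (f' \oc g'); split.
  by rewrite -cA (ra1 e3) e1.
by rewrite -cA (ra1 e2) e4.
Qed.

Lemma is_iso1 X : is_iso (idm X). Proof. by exists (idm X); rewrite c1m. Qed.

Lemma zero_idm Z : is_zero_obj Z -> idm Z = 0.
Proof. by move=> H; case: (H Z) => H1 _; apply: H1. Qed.
Lemma idm_zero Z : idm Z = 0 -> is_zero_obj Z.
Proof. move=> e X; split=> f.
  by rewrite -[f]c1m e c0m.
by rewrite -[f]cm1 e cm0. Qed.

Lemma zero_iso Z Z' : is_zero_obj Z -> is_zero_obj Z' -> iso Z Z'.
Proof. move=> H H'; exists 0, 0; by rewrite (zero_idm H) (zero_idm H') !c0m. Qed.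

Lemma iso_zero Z Z' : is_zero_obj Z -> iso Z Z' -> is_zero_obj Z'.
Proof. move=> H [f [g [_ e]]]; apply: idm_zero; by rewrite -e (proj2 (H Z') f) c0m. Qed.

Lemma dsum_iso S X Y S' X' Y' : is_dsum S X Y -> is_dsum S' X' Y' ->
  iso X X' -> iso Y Y' -> iso S S'.
Proof.
case=> i1 [i2 [p1 [p2 [e11 e22 e12 e21 eS]]]].
case=> j1 [j2 [q1 [q2 [f11 f22 f12 f21 fS]]]].
case=> a [a' [ea ea']] [b [b' [eb eb']]].
exists (j1 \oc (a \oc p1) + j2 \oc (b \oc p2)), (i1 \oc (a' \oc q1) + i2 \oc (b' \oc q2)).
split; rewrite !cDl !cDr -!cA.
  rewrite !(ra1 f11) !(ra1 f22) !(ra0 f12) !(ra0 f21) !cm0 addr0 add0r.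
  by rewrite !(ra1 ea) !(ra1 eb).
rewrite !(ra1 e11) !(ra1 e22) !(ra0 e12) !(ra0 e21) !cm0 addr0 add0r.
by rewrite !(ra1 ea') !(ra1 eb').
Qed.

Lemma dsum_comm S X Y : is_dsum S X Y -> is_dsum S Y X.
Proof. case=> i1 [i2 [p1 [p2 [e11 e22 e12 e21 eS]]]].
by exists i2, i1, p2, p1; split; rewrite // addrC. Qed.

Lemma dsum_zero S X Z : is_zero_obj Z -> is_dsum S X Z -> iso S X.
Proof. move=> HZ [i1 [i2 [p1 [p2 [e11 e22 e12 e21 eS]]]]].
exists p1, i1; split => //. by rewrite -eS (proj1 (HZ S) p2) cm0 addr0. Qed.

Lemma dsum_zero_ex X Z : is_zero_obj Z -> is_dsum X X Z.
Proof. move=> HZ; exists (idm X), 0, (idm X), 0; split; rewrite ?c1m ?cm0 ?c0m ?addr0 //.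
by rewrite (zero_idm HZ). Qed.

Lemma biprod_ext S X Y i1 i2 p1 p2 : @is_biprod C S X Y i1 i2 p1 p2 ->
  forall W (u v : Hom W S), p1 \oc u = p1 \oc v -> p2 \oc u = p2 \oc v -> u = v.
Proof. case=> _ _ _ _ eS W u v e1 e2.
by rewrite -[u]c1m -[v]c1m -eS !cDl -!cA e1 e2. Qed.

Lemma dsum_assoc S1 S X Y Z S2 S' : is_dsum S1 X Y -> is_dsum S S1 Z ->
  is_dsum S2 Y Z -> is_dsum S' X S2 -> iso S S'.
Proof.
case=> i1 [i2 [p1 [p2 B1]]]; have [e11 e22 e12 e21 eS] := B1.
case=> k1 [k2 [r1 [r2 B2]]]; have [g11 g22 g12 g21 gS] := B2.
case=> j1 [j2 [q1 [q2 B3]]]; have [f11 f22 f12 f21 fS] := B3.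
case=> l1 [l2 [s1 [s2 B4]]]; have [h11 h22 h12 h21 hS] := B4.
exists (l1 \oc (p1 \oc r1) + l2 \oc (j1 \oc (p2 \oc r1)) + l2 \oc (j2 \oc r2)).
exists (k1 \oc (i1 \oc s1) + k1 \oc (i2 \oc (q1 \oc s2)) + k2 \oc (q2 \oc s2)).
split.
  apply: (biprod_ext B2); rewrite cm1; rewrite ?cDl ?cDr -?cA;
  rewrite ?(ra1 h11) ?(ra1 h22) ?(ra0 h12) ?(ra0 h21) ?(ra1 g11) ?(ra1 g22) ?(ra0 g12) ?(ra0 g21);
  rewrite ?(ra1 f11) ?(ra1 f22) ?(ra0 f12) ?(ra0 f21) ?(ra1 e11) ?(ra1 e22) ?(ra0 e12) ?(ra0 e21);
  rewrite ?cm0 ?addr0 ?add0r //.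
  apply: (biprod_ext B1); rewrite ?cDr -?cA;
  rewrite ?(ra1 e11) ?(ra1 e22) ?(ra0 e12) ?(ra0 e21) ?cm0 ?addr0 ?add0r //.
apply: (biprod_ext B4); rewrite cm1; rewrite ?cDl ?cDr -?cA;
  rewrite ?(ra1 h11) ?(ra1 h22) ?(ra0 h12) ?(ra0 h21) ?(ra1 g11) ?(ra1 g22) ?(ra0 g12) ?(ra0 g21);
  rewrite ?(ra1 f11) ?(ra1 f22) ?(ra0 f12) ?(ra0 f21) ?(ra1 e11) ?(ra1 e22) ?(ra0 e12) ?(ra0 e21);
  rewrite ?cm0 ?addr0 ?add0r //.
apply: (biprod_ext B3); rewrite ?cDr -?cA;
  rewrite ?(ra1 f11) ?(ra1 f22) ?(ra0 f12) ?(ra0 f21) ?cm0 ?addr0 ?add0r //.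
Qed.
End Basics.
Section Tri.
Variables (C : addcat) (T : triang C).
Implicit Types X Y Z W : Obj C.

Lemma shm0 X Y : shm T (0 : Hom X Y) = 0.
Proof. have H := @shm_add _ T _ _ (0 : Hom X Y) 0; rewrite addr0 in H.
apply: (addrI (shm T (0 : Hom X Y))); by rewrite -H addr0. Qed.
Lemma shmN X Y (f : Hom X Y) : shm T (- f) = - shm T f.
Proof. apply: (addIr (shm T f)); by rewrite -(@shm_add _ T) !addNr shm0. Qed.
Lemma shm1 X : shm T (idm X) = idm (sh T X). Proof. exact: (@shm_id _ T). Qed.
Lemma shmC X Y Z (g : Hom Y Z) (f : Hom X Y) : shm T (g \oc f) = shm T g \oc shm T f.
Proof. exact: (@shm_comp _ T). Qed.

Lemma sh_zero Z : is_zero_obj Z -> is_zero_obj (sh T Z).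
Proof. move=> H; apply: idm_zero; by rewrite -shm1 (zero_idm H) shm0. Qed.

Lemma shm_inj X Y (f g : Hom X Y) : shm T f = shm T g -> f = g.
Proof. case: (@shm_bij _ T X Y) => k k1 _; move=> e; by rewrite -(k1 f) -(k1 g) e. Qed.
Lemma shm_surj X Y (u : Hom (sh T X) (sh T Y)) : exists f, shm T f = u.
Proof. case: (@shm_bij _ T X Y) => k _ k2; by exists (k u). Qed.

Lemma zero_ex' : exists Z : Obj C, is_zero_obj Z.
Proof. exact: (@zero_ex C). Qed.

Lemma morph X Y Z X' Y' Z' (f : Hom X Y) (g : Hom Y Z) (h : Hom Z (sh T X))
  (f' : Hom X' Y') (g' : Hom Y' Z') (h' : Hom Z' (sh T X'))
  (a : Hom X X') (b : Hom Y Y') :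
  dist T f g h -> dist T f' g' h' -> b \oc f = f' \oc a ->
  exists c : Hom Z Z', c \oc g = g' \oc b /\ shm T a \oc h = h' \oc c.
Proof. exact: dist_morph. Qed.

Lemma comp_gf X Y Z (f : Hom X Y) (g : Hom Y Z) (h : Hom Z (sh T X)) :
  dist T f g h -> g \oc f = 0.
Proof.
move=> tf; case: zero_ex' => Z0 HZ.
have t1 := @dist_id _ T X _ HZ.
have E : f \oc idm X = f \oc idm X by [].
have [c [Hc _]] := morph t1 tf E.
by rewrite -Hc cm0.
Qed.

Lemma rot X Y Z (f : Hom X Y) (g : Hom Y Z) (h : Hom Z (sh T X)) :
  dist T f g h -> dist T g h (- shm T f).
Proof. by move/dist_rot. Qed.

Lemma comp_hg X Y Z (f : Hom X Y) (g : Hom Y Z) (h : Hom Z (sh T X)) :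
  dist T f g h -> h \oc g = 0.
Proof. by move/rot/comp_gf. Qed.

Lemma dist_0id Z0 W : is_zero_obj Z0 ->
  dist T (0 : Hom Z0 W) (idm W) (0 : Hom W (sh T Z0)).
Proof.
move=> HZ; apply/dist_rot; rewrite shm0 oppr0.
exact: (@dist_id _ T W _ (sh_zero HZ)).
Qed.

Lemma exact_contra X Y Z (f : Hom X Y) (g : Hom Y Z) (h : Hom Z (sh T X)) W
  (v : Hom Y W) : dist T f g h -> v \oc f = 0 -> exists s, v = s \oc g.
Proof.
move=> tf vf; case: zero_ex' => Z0 HZ.
have E : v \oc f = (0 : Hom Z0 W) \oc (0 : Hom X Z0) by rewrite vf c0m.
have [c [Hc _]] := morph tf (dist_0id W HZ) E.
by exists c; rewrite Hc c1m.
Qed.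

Lemma unip Z (n : Hom Z Z) : n \oc n = 0 -> is_iso (idm Z - n).
Proof.
move=> nn; exists (idm Z + n); split.
  by rewrite cBr !cDl !c1m !cm1 nn addr0 addrK.
by rewrite cBl !cDr !c1m !cm1 nn addr0 addrK.
Qed.

Lemma auto X Y Z (f : Hom X Y) (g : Hom Y Z) (h : Hom Z (sh T X)) (t : Hom Z Z) :
  dist T f g h -> t \oc g = g -> h \oc t = h -> is_iso t.
Proof.
move=> tf tg ht.
have E : (idm Z - t) \oc g = 0 by rewrite cBl c1m tg subrr.
have [s Hs] := exact_contra (rot tf) E.
have nn : (idm Z - t) \oc (idm Z - t) = 0.
  by rewrite {1}Hs -cA cBr cm1 ht subrr cm0.
have := unip nn; by rewrite opprB addrC subrK.
Qed.

Lemma sumtri X Y Z (f : Hom X Y) (g : Hom Y Z) (h : Hom Z (sh T X)) A S1 S2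
   i1 i2 p1 p2 j1 j2 q1 q2 :
  dist T f g h -> @is_biprod C S1 Y A i1 i2 p1 p2 -> @is_biprod C S2 Z A j1 j2 q1 q2 ->
  dist T (i1 \oc f) (j1 \oc (g \oc p1) + j2 \oc p2) (h \oc q1).
Proof.
move=> tf B1 B2; have [e11 e22 e12 e21 eS] := B1; have [f11 f22 f12 f21 fS] := B2.
have [W [g' [h' tW]]] := @dist_ext _ T _ _ (i1 \oc f).
have E1 : i1 \oc f = (i1 \oc f) \oc idm X by rewrite cm1.
have [c [Hc1 Hc2]] := morph tf tW E1.
have E2 : p1 \oc (i1 \oc f) = f \oc idm X by rewrite cA e11 c1m cm1.
have [d [Hd1 Hd2]] := morph tW tf E2.
rewrite shm1 c1m in Hc2; rewrite shm1 c1m in Hd2.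
have [al' [ea1 ea2]] : is_iso (d \oc c).
  apply: (auto tf); first by rewrite -cA Hc1 cA Hd1 -cA e11 cm1.
  by rewrite cA -Hd2 Hc2.
have hal : h \oc al' = h.
  have E' : h \oc (d \oc c) = h by rewrite cA -Hd2 Hc2.
  by rewrite -{1}E' -cA ea2 cm1.
have alg : al' \oc g = g.
  have E : (d \oc c) \oc g = g by rewrite -cA Hc1 cA Hd1 -cA e11 cm1.
  by rewrite -{1}E cA ea1 c1m.
have [d' [d'c d'g hd']] : exists d' : Hom W Z,
    [/\ d' \oc c = idm Z, d' \oc g' = g \oc p1 & h \oc d' = h'].
  exists (al' \oc d); split.
  - by rewrite -cA ea1.
  - by rewrite -cA Hd1 cA alg.
  - by rewrite cA hal Hd2.
have E3 : p2 \oc (i1 \oc f) = 0 by rewrite cA e21 c0m.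
have [e He] := exact_contra tW E3.
have [e' [e'g e'c]] : exists e' : Hom W A, e' \oc g' = p2 /\ e' \oc c = 0.
  exists (e - e \oc (c \oc d')); split.
    by rewrite cBl -He -!cA d'g (cA c) Hc1 -!cA (cA e) -He (ra0 e21) subr0.
  by rewrite cBl -!cA d'c cm1 subrr.
pose psi := j1 \oc d' + j2 \oc e'.
pose phi := c \oc q1 + g' \oc (i2 \oc q2).
have pp : psi \oc phi = idm S2.
  apply: (biprod_ext B2); rewrite cm1 /psi /phi ?cDl ?cDr -?cA;
  rewrite ?(ra1 f11) ?(ra0 f12) ?(ra1 f22) ?(ra0 f21) ?cm0 ?c0m ?addr0 ?add0r.
    by rewrite cA d'c c1m cA d'g -cA (ra0 e12) cm0 addr0.
  by rewrite cA e'c c0m add0r cA e'g cA e22 c1m.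
have psig : psi \oc g' = j1 \oc (g \oc p1) + j2 \oc p2.
  by rewrite /psi cDl -!cA d'g e'g.
have hpsi : (h \oc q1) \oc psi = h'.
  by rewrite /psi cDr -!cA (ra1 f11) (ra0 f12) cm0 addr0 hd'.
have [be' [eb1 eb2]] : is_iso (phi \oc psi).
  apply: (auto tW).
    rewrite -cA psig /phi cDl !cDr -?cA (ra1 f11) (ra0 f12) (ra0 f21) (ra1 f22).
    by rewrite !cm0 addr0 add0r (cA c) Hc1 -cA -cDr eS cm1.
  rewrite cA /phi cDr (cA h' c) -Hc2 (cA h' g') (comp_hg tW) c0m addr0.
  exact: hpsi.
have ipsi : is_iso psi.
  exists phi; split => //.
  have E : phi = be' \oc phi by rewrite -{2}[phi]cm1 -pp (cA phi psi phi) cA eb1 c1m.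
  by rewrite E -cA eb1.
apply: (@dist_iso _ T _ _ _ _ _ _ _ _ _ _ _ _ (idm X) (idm S1) psi (is_iso1 _) (is_iso1 _) ipsi _ _ _ tW).
- by rewrite c1m cm1.
- by rewrite psig cm1.
- by rewrite shm1 c1m hpsi.
Qed.
End Tri.
Section Dense.
Variables (C : addcat) (T : triang C) (D : Obj C -> Prop).
Hypothesis HD : dense_sub T D.
Implicit Types X Y Z W : Obj C.

Definition plus X Y : Obj C :=
  proj1_sig (constructive_indefinite_description _ (@dsum_ex C X Y)).
Lemma plusP X Y : is_dsum (plus X Y) X Y.
Proof. exact: proj2_sig (constructive_indefinite_description _ (@dsum_ex C X Y)). Qed.
Definition Z0 : Obj C := proj1_sig (constructive_indefinite_description _ (@zero_ex C)).
Lemma Z0P : is_zero_obj Z0.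
Proof. exact: proj2_sig (constructive_indefinite_description _ (@zero_ex C)). Qed.

Lemma Diso X Y : iso X Y -> D X -> D Y. Proof. case: HD => [[H _ _ _] _]; exact: H. Qed.
Lemma Dsh X : D X -> D (sh T X). Proof. case: HD => [[_ H _ _] _]; exact: H. Qed.
Lemma Dunsh X : D (sh T X) -> D X. Proof. case: HD => [[_ _ H _] _]; exact: H. Qed.
Lemma Dtri X Y Z (f : Hom X Y) (g : Hom Y Z) (h : Hom Z (sh T X)) :
  dist T f g h -> D X -> D Y -> D Z.
Proof. case: HD => [[_ _ _ H] _]; exact: H. Qed.
Lemma Ddense U : exists V S, is_dsum S U V /\ D S. Proof. case: HD => _ H; exact: H. Qed.

Lemma DZ0 : D Z0.
Proof.
have [V [S [_ DS]]] := Ddense Z0.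
exact: (Dtri (@dist_id _ T S _ Z0P) DS DS).
Qed.

Lemma Dmid X Y Z (f : Hom X Y) (g : Hom Y Z) (h : Hom Z (sh T X)) :
  dist T f g h -> D X -> D Z -> D Y.
Proof.
move=> t DX DZ; have t2 := rot (rot t).
apply: Dunsh; exact: (Dtri t2 DZ (Dsh DX)).
Qed.

Lemma pl_iso X Y X' Y' : iso X X' -> iso Y Y' -> iso (plus X Y) (plus X' Y').
Proof. exact: dsum_iso (plusP _ _) (plusP _ _). Qed.
Lemma pl_comm X Y : iso (plus X Y) (plus Y X).
Proof. exact: dsum_iso (plusP _ _) (dsum_comm (plusP Y X)) (iso_refl _) (iso_refl _). Qed.
Lemma pl_assoc X Y Z : iso (plus (plus X Y) Z) (plus X (plus Y Z)).
Proof. exact: dsum_assoc (plusP _ _) (plusP _ _) (plusP _ _) (plusP _ _). Qed.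
Lemma pl_zero X Z : is_zero_obj Z -> iso (plus X Z) X.
Proof. move=> HZ; exact: dsum_zero HZ (plusP _ _). Qed.
Lemma dsum_pl S X Y : is_dsum S X Y -> iso S (plus X Y).
Proof. move=> H; exact: dsum_iso H (plusP _ _) (iso_refl _) (iso_refl _). Qed.

Lemma pl_swap A B E : iso (plus (plus A B) E) (plus (plus A E) B).
Proof.
apply: iso_trans (pl_assoc _ _ _) _.
apply: iso_trans _ (iso_sym (pl_assoc _ _ _)).
exact: pl_iso (iso_refl _) (pl_comm _ _).
Qed.
Lemma pl_swap2 A B E : iso (plus A (plus B E)) (plus B (plus A E)).
Proof.
apply: iso_trans (iso_sym (pl_assoc _ _ _)) _.
apply: iso_trans _ (pl_assoc _ _ _).
exact: pl_iso (pl_comm _ _) (iso_refl _).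
Qed.

Lemma split_tri B A S i1 i2 p1 p2 : @is_biprod C S B A i1 i2 p1 p2 ->
  exists g h, dist T i1 g (h : Hom (plus Z0 A) (sh T B)).
Proof.
move=> B1; have t := @dist_id _ T B _ Z0P.
have [j1 [j2 [q1 [q2 B2]]]] := plusP Z0 A.
have := sumtri t B1 B2; rewrite cm1 => t'.
by exists (j1 \oc (0 \oc p1) + j2 \oc p2), (0 \oc q1).
Qed.

Lemma pl_Z0l A : iso (plus Z0 A) A.
Proof. apply: iso_trans (pl_comm _ _) _; exact: pl_zero Z0P. Qed.

Lemma D_plus S B A : is_dsum S B A -> D B -> D A -> D S.
Proof.
case=> i1 [i2 [p1 [p2 B1]]] DB DA.
have [g [h t]] := split_tri B1.
exact: Dmid t DB (Diso (iso_sym (pl_Z0l A)) DA).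
Qed.

Lemma D_cancel S B A : is_dsum S B A -> D S -> D B -> D A.
Proof.
case=> i1 [i2 [p1 [p2 B1]]] DS DB.
have [g [h t]] := split_tri B1.
exact: Diso (pl_Z0l A) (Dtri t DB DS).
Qed.

Definition eqv X Y := exists D1 D2, [/\ D D1, D D2 & iso (plus X D1) (plus Y D2)].

Lemma eqv_iso X Y : iso X Y -> eqv X Y.
Proof. move=> H; exists Z0, Z0; split; [exact: DZ0|exact: DZ0|]. exact: pl_iso H (iso_refl _). Qed.
Lemma eqv_refl X : eqv X X. Proof. exact: eqv_iso (iso_refl _). Qed.
Lemma eqv_sym X Y : eqv X Y -> eqv Y X.
Proof. by case=> D1 [D2 [H1 H2 H]]; exists D2, D1; split => //; exact: iso_sym. Qed.
Lemma eqv_trans X Y Z : eqv X Y -> eqv Y Z -> eqv X Z.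
Proof.
case=> D1 [D2 [H1 H2 H]] [D3 [D4 [H3 H4 H']]].
exists (plus D1 D3), (plus D4 D2); split.
- exact: D_plus (plusP _ _) H1 H3.
- exact: D_plus (plusP _ _) H4 H2.
apply: iso_trans (iso_sym (pl_assoc _ _ _)) _.
apply: iso_trans (pl_iso H (iso_refl _)) _.
apply: iso_trans (pl_swap _ _ _) _.
apply: iso_trans (pl_iso H' (iso_refl _)) _.
exact: pl_assoc.
Qed.
Lemma eqv_plus X Y W : eqv X Y -> eqv (plus X W) (plus Y W).
Proof.
case=> D1 [D2 [H1 H2 H]]; exists D1, D2; split => //.
apply: iso_trans (pl_swap _ _ _) _.
apply: iso_trans (pl_iso H (iso_refl _)) _.
exact: pl_swap.
Qed.
Lemma eqv_plus2 X Y X' Y' : eqv X X' -> eqv Y Y' -> eqv (plus X Y) (plus X' Y').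
Proof.
move=> H H'; apply: eqv_trans (eqv_plus _ H) _.
apply: eqv_trans (eqv_iso (pl_comm _ _)) _.
apply: eqv_trans (eqv_plus _ H') _.
exact: eqv_iso (pl_comm _ _).
Qed.
Lemma eqv_D X E : D E -> eqv (plus X E) X.
Proof.
move=> DE; exists Z0, E; split => //; first exact: DZ0.
exact: pl_zero Z0P.
Qed.
Lemma eqv_DZ E : D E -> eqv E Z0.
Proof.
move=> DE; apply: eqv_trans (eqv_iso (iso_sym (pl_Z0l E))) _.
exact: eqv_D.
Qed.
Lemma eqv_to_D X : eqv X Z0 -> D X.
Proof.
case=> D1 [D2 [H1 H2 H]].
have DS : D (plus X D1) by apply: Diso (iso_sym H) _; exact: Diso (iso_sym (pl_Z0l _)) H2.
exact: D_cancel (dsum_comm (plusP X D1)) DS H1.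
Qed.

Lemma triL X Y Z (f : Hom X Y) (g : Hom Y Z) (h : Hom Z (sh T X)) :
  dist T f g h -> D X -> eqv Y Z.
Proof.
move=> t DX.
have [V [S [[i1 [i2 [p1 [p2 B1]]]] DS]]] := Ddense Y.
have [j1 [j2 [q1 [q2 B2]]]] := plusP Z V.
have t' := sumtri t B1 B2.
have DZV : D (plus Z V) := Dtri t' DX DS.
exists (plus Z V), S; split => //.
apply: iso_trans (pl_swap2 _ _ _) _.
apply: pl_iso (iso_refl _) _.
apply: iso_sym; apply: dsum_pl; by exists i1, i2, p1, p2.
Qed.

Lemma triL2 P Q E (u : Hom P Q) (v : Hom Q E) (w : Hom E (sh T P)) :
  dist T u v w -> D E -> eqv P Q.
Proof.
move=> t DE.
have [E' [k [k' [kk1 kk2]]]] := @sh_esurj _ T E.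
have DE' : D E' by apply: Dunsh; exact: Diso (iso_sym (ex_intro _ k (ex_intro _ k' (conj kk1 kk2)))) DE.
have ik' : is_iso k' by exists k.
have t1 : dist T u (k' \oc v) (w \oc k).
  apply: (@dist_iso _ T _ _ _ _ _ _ _ _ _ _ _ _ (idm P) (idm Q) k' (is_iso1 _) (is_iso1 _) ik' _ _ _ t).
  - by rewrite c1m cm1.
  - by rewrite cm1.
  - by rewrite shm1 c1m -cA kk2 cm1.
have [w0 Hw0] := shm_surj (- (w \oc k)).
have t2 : dist T w0 u (k' \oc v) by apply/dist_rot; rewrite Hw0 opprK.
exact: triL t2 DE'.
Qed.

Lemma tri_eqv X Y Z (f : Hom X Y) (g : Hom Y Z) (h : Hom Z (sh T X)) :
  dist T f g h -> eqv Y (plus X Z).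
Proof.
move=> t.
have [V [S [[j1 [j2 [q1 [q2 B2]]]] DS]]] := Ddense Z.
have [i1 [i2 [p1 [p2 B1]]]] := plusP Y V.
have t' := sumtri t B1 B2.
have e1 : eqv X (plus Y V) := triL2 t' DS.
have DVZ : D (plus V Z).
  apply: Diso DS; apply: iso_trans _ (pl_comm _ _); apply: dsum_pl; by exists j1, j2, q1, q2.
apply: eqv_sym; apply: eqv_trans (eqv_plus _ e1) _.
apply: eqv_trans (eqv_iso (pl_assoc _ _ _)) _.
exact: eqv_D.
Qed.
Fixpoint ls (l : seq (Obj C)) : Obj C := if l is x :: l' then plus x (ls l') else Z0.
Fixpoint gs (l : seq (Obj C)) (X : Obj C) : int := if l is Y :: l' then gen Y X + gs l' X else 0.

Lemma gen01 Y X : gen Y X = (if excluded_middle_informative (iso X Y) then 1 else 0).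
Proof. by []. Qed.
Lemma gen_ge0 Y X : 0 <= gen Y X.
Proof. by rewrite gen01; case: excluded_middle_informative. Qed.
Lemma gen_self X : gen X X = 1.
Proof. rewrite gen01; case: excluded_middle_informative => // H; case: H; exact: iso_refl. Qed.
Lemma gen_iso p q : iso p q -> forall X, gen p X = gen q X.
Proof.
move=> H X; rewrite !gen01.
case: excluded_middle_informative => a; case: excluded_middle_informative => b //.
- by case: b; exact: iso_trans a H.
- by case: a; exact: iso_trans b (iso_sym H).
Qed.
Lemma gen_nz Y X : gen Y X != 0 -> iso X Y.
Proof. by rewrite gen01; case: excluded_middle_informative. Qed.
Lemma gs_ge0 l X : 0 <= gs l X.
Proof. elim: l => //= a l IH; exact: addr_ge0 (gen_ge0 _ _) IH. Qed.
Lemma gs_cat l1 l2 X : gs (l1 ++ l2) X = gs l1 X + gs l2 X.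
Proof. elim: l1 => /= [|a l IH]; first by rewrite add0r. by rewrite IH addrA. Qed.
Lemma gs_nseq n U X : gs (nseq n U) X = gen U X *+ n.
Proof. elim: n => //= n IH; by rewrite IH mulrS. Qed.

Lemma ls_cat l1 l2 : iso (ls (l1 ++ l2)) (plus (ls l1) (ls l2)).
Proof.
elim: l1 => /= [|a l IH]; first exact: iso_sym (pl_Z0l _).
apply: iso_trans (pl_iso (iso_refl _) IH) _.
exact: iso_sym (pl_assoc _ _ _).
Qed.
Lemma ls_perm Q1 q Q2 : iso (ls (Q1 ++ q :: Q2)) (plus q (ls (Q1 ++ Q2))).
Proof.
elim: Q1 => /= [|a l IH]; first exact: iso_refl.
apply: iso_trans (pl_iso (iso_refl _) IH) _.
exact: pl_swap2.
Qed.

Lemma gs_find Qs p : gs Qs p != 0 -> exists Q1 q Q2, Qs = Q1 ++ q :: Q2 /\ iso p q.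
Proof.
elim: Qs => /= [|a l IH] //.
case: (boolP (gen a p == 0)) => [/eqP -> | H] Hs.
  rewrite add0r in Hs; have [Q1 [q [Q2 [-> Hi]]]] := IH Hs.
  by exists (a :: Q1), q, Q2.
by exists [::], a, l; split => //; exact: gen_nz H.
Qed.

Lemma multiset Ps Qs : (forall X, gs Ps X = gs Qs X) -> iso (ls Ps) (ls Qs).
Proof.
elim: Ps Qs => [|p Ps IH] Qs E.
  case: Qs E => [|q Qs] E; first exact: iso_refl.
  have := E q; rewrite /= gen_self => E'.
  have := gs_ge0 Qs q; move: E'; set k := gs Qs q; lia.
have : gs Qs p != 0.
  rewrite -E /= gen_self; have := gs_ge0 Ps p; set k := gs Ps p; lia.
case/gs_find => Q1 [q [Q2 [EQ Hi]]].
have E2 : forall X, gs Ps X = gs (Q1 ++ Q2) X.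
  move=> X; have := E X; rewrite EQ /= !gs_cat /= (gen_iso Hi X).
  lia.
rewrite EQ /=; apply: iso_trans _ (iso_sym (ls_perm _ _ _)).
exact: pl_iso Hi (IH _ E2).
Qed.

Lemma main_ind a : groth_rel T a ->
  exists Ps Ns, (forall X, a X = gs Ps X - gs Ns X) /\ eqv (ls Ps) (ls Ns).
Proof.
elim=> {a}.
- move=> U V W f g h t; exists [:: V], [:: U; W]; split.
    by move=> X /=; rewrite !addr0 opprD addrA.
  rewrite /=; apply: eqv_trans (eqv_iso (pl_zero _ Z0P)) _.
  apply: eqv_trans (tri_eqv t) _.
  exact: eqv_iso (pl_iso (iso_refl _) (iso_sym (pl_zero _ Z0P))).
- by exists [::], [::]; split => //=; exact: eqv_refl.
- move=> a b _ [Pa [Na [Ea Ha]]] _ [Pb [Nb [Eb Hb]]].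
  exists (Pa ++ Pb), (Na ++ Nb); split.
    by move=> X; rewrite Ea Eb !gs_cat opprD addrACA.
  apply: eqv_trans (eqv_iso (ls_cat _ _)) _.
  apply: eqv_trans _ (eqv_iso (iso_sym (ls_cat _ _))).
  exact: eqv_plus2.
- move=> a _ [Pa [Na [Ea Ha]]]; exists Na, Pa; split.
    by move=> X; rewrite Ea opprB.
  exact: eqv_sym.
Qed.

Lemma pow_ls U n : exists S, is_pow U n S /\ iso S (ls (nseq n U)).
Proof.
elim: n => /= [|n [S [HS HI]]].
  by exists Z0; split; [exact: Z0P | exact: iso_refl].
exists (plus S U); split; first by exists S; split => //; exact: plusP.
apply: iso_trans (pl_comm _ _) _; exact: pl_iso (iso_refl _) HI.
Qed.

Lemma final (HR : radical_sub D) U : groth_torsion T U -> D U.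
Proof.
case=> n [n0 Hr].
have [Ps [Ns [E He]]] := main_ind Hr.
have E' : forall X, gs Ps X = gs (nseq n U ++ Ns) X.
  by move=> X; rewrite gs_cat gs_nseq E subrK.
have e1 : eqv (ls Ns) (plus (ls (nseq n U)) (ls Ns)).
  apply: eqv_trans (eqv_sym He) _.
  apply: eqv_iso; apply: iso_trans (multiset E') _; exact: ls_cat.
have [V [S [dS DS]]] := Ddense (ls Ns).
have DNV : D (plus (ls Ns) V) by apply: Diso DS; exact: dsum_pl.
have e2 : eqv (ls (nseq n U)) Z0.
  apply: eqv_trans (eqv_sym (eqv_D _ DNV)) _.
  apply: eqv_trans (eqv_iso (iso_sym (pl_assoc _ _ _))) _.
  apply: eqv_trans (eqv_plus _ (eqv_sym e1)) _.
  exact: eqv_DZ.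
have [P [HP HI]] := pow_ls U n.
apply: (HR U n P n0 HP).
exact: Diso (iso_sym HI) (eqv_to_D e2).
Qed.
End Dense.

Theorem lemma3p9 (C : addcat) (T : triang C) (D : Obj C -> Prop) :
  dense_sub T D -> radical_sub D ->
  forall U : Obj C, groth_torsion T U -> D U.
Proof. move=> HD HR U; exact: final HD HR U. Qed.
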